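(* Let $X$ be a Banach space of analytic functions on $\mathbb{U}$ with $H_\infty\hookrightarrow X\hookrightarrow H_2$, and let $E$ be an order-continuous Banach sequence lattice with $\ell_2\hookrightarrow E\hookrightarrow\ell_\infty$. Let $\lambda=\{\lambda_n\}$ be such that the multiplier operator $M_\lambda\colon X\to E$, $M_\lambda f=\{\lambda_n\hat f(n)\}$, is a bounded operator. Then $M_\lambda\colon X\to E$ is compact if and only if \[\limsup_{n\to\infty}|\lambda_n|=0.\]
   Context: $\mathbb{U}$ is the open unit disk, $H_p$ the classical Hardy spaces on $\mathbb{U}$, $f=\sum_{n\ge0}\hat f(n)z^n$ the Taylor expansion; ''$\hookrightarrow$'' denotes continuous inclusion. A Banach sequence lattice on $\mathbb{Z}_+$ is a Banach space $E$ of sequences with $|y_n|\le|x_n|$ for all $n$, $x\in E$ implying $y\in E$ and $\|y\|_E\le\|x\|_E$; it is order-continuous if every nonnegative nonincreasing sequence in $E$ converging to $0$ pointwise converges to $0$ in norm. *)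

(* Defs.v *)
From Stdlib Require Import Reals.
From Coquelicot Require Import Coquelicot.
Open Scope R_scope.

(* An analytic function on the unit disk U is identified with its Taylor
   coefficient sequence a = (hat f(n))_n; f(z) = sum_n a n z^n. *)
Definition cseq := nat -> C.

Definition seq_add (a b : cseq) : cseq := fun n => Cplus (a n) (b n).
Definition seq_sub (a b : cseq) : cseq := fun n => Cminus (a n) (b n).
Definition seq_scal (c : C) (a : cseq) : cseq := fun n => Cmult c (a n).
Definition seq_zero : cseq := fun _ => RtoC 0.

(* the power series converges at every point of the open unit disk,
   i.e. it defines an analytic function on U *)
Definition analytic_on_disk (a : cseq) : Prop :=
  forall z : C, Cmod z < 1 -> ex_series (fun n => Cmult (a n) (Cpow z n)).

Definition sup_bounded_by (a : cseq) (M : R) : Prop :=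
  forall z : C, Cmod z < 1 ->
  forall l : C, is_series (fun n => Cmult (a n) (Cpow z n)) l -> Cmod l <= M.

Definition in_Hinf (a : cseq) : Prop :=
  analytic_on_disk a /\ exists M, sup_bounded_by a M.

(* f in H_2 (resp. a sequence in l_2): sum |a_n|^2 < oo *)
Definition in_l2 (a : cseq) : Prop :=
  ex_series (fun n => (Cmod (a n))^2).

Definition l2_norm (a : cseq) : R :=
  sqrt (Series (fun n => (Cmod (a n))^2)).

Record Banach_seq_space (S : cseq -> Prop) (N : cseq -> R) : Prop := {
  bs_zero : S seq_zero;
  bs_add : forall a b, S a -> S b -> S (seq_add a b);
  bs_scal : forall c a, S a -> S (seq_scal c a);
  bs_nonneg : forall a, S a -> 0 <= N a;
  bs_definite : forall a, S a -> N a = 0 -> a = seq_zero;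
  bs_homog : forall c a, S a -> N (seq_scal c a) = Cmod c * N a;
  bs_triangle : forall a b, S a -> S b -> N (seq_add a b) <= N a + N b;
  bs_complete : forall u : nat -> cseq, (forall k, S (u k)) ->
    (forall eps, 0 < eps -> exists K, forall k m, (K <= k)%nat -> (K <= m)%nat ->
        N (seq_sub (u k) (u m)) < eps) ->
    exists v, S v /\ is_lim_seq (fun k => N (seq_sub (u k) v)) 0
}.

Definition Banach_space_of_analytic (S : cseq -> Prop) (N : cseq -> R) : Prop :=
  Banach_seq_space S N /\ forall a, S a -> analytic_on_disk a.

Definition Hinf_incl (S : cseq -> Prop) (N : cseq -> R) : Prop :=
  exists K, 0 <= K /\ forall a M, in_Hinf a -> sup_bounded_by a M ->
     S a /\ N a <= K * M.

Definition incl_l2 (S : cseq -> Prop) (N : cseq -> R) : Prop :=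
  exists K, 0 <= K /\ forall a, S a -> in_l2 a /\ l2_norm a <= K * N a.

Definition l2_incl (S : cseq -> Prop) (N : cseq -> R) : Prop :=
  exists K, 0 <= K /\ forall a, in_l2 a -> S a /\ N a <= K * l2_norm a.

Definition incl_linf (S : cseq -> Prop) (N : cseq -> R) : Prop :=
  exists K, 0 <= K /\ forall a, S a -> forall n, Cmod (a n) <= K * N a.

Definition Banach_seq_lattice (S : cseq -> Prop) (N : cseq -> R) : Prop :=
  Banach_seq_space S N /\
  forall x y : cseq, S x -> (forall n, Cmod (y n) <= Cmod (x n)) ->
     S y /\ N y <= N x.

Definition order_continuous (SE : cseq -> Prop) (N : cseq -> R) : Prop :=
  forall u : nat -> nat -> R,
    (forall k, SE (fun n => RtoC (u k n))) ->
    (forall k n, 0 <= u k n) ->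
    (forall k n, u (S k) n <= u k n) ->
    (forall n, is_lim_seq (fun k => u k n) 0) ->
    is_lim_seq (fun k => N (fun n => RtoC (u k n))) 0.

Definition multiplier (lam : cseq) (a : cseq) : cseq :=
  fun n => Cmult (lam n) (a n).

Definition bounded_multiplier (SX : cseq -> Prop) (NX : cseq -> R)
    (SE : cseq -> Prop) (NE : cseq -> R) (lam : cseq) : Prop :=
  (forall a, SX a -> SE (multiplier lam a)) /\
  exists K, 0 <= K /\ forall a, SX a -> NE (multiplier lam a) <= K * NX a.

(* M_lambda : X -> E is compact: the image of the unit ball is relatively
   compact in E (sequential form, as E is a metric space) *)
Definition compact_multiplier (SX : cseq -> Prop) (NX : cseq -> R)
    (SE : cseq -> Prop) (NE : cseq -> R) (lam : cseq) : Prop :=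
  forall f : nat -> cseq, (forall k, SX (f k)) -> (forall k, NX (f k) <= 1) ->
    exists (phi : nat -> nat) (g : cseq),
      (forall k, (phi k < phi (S k))%nat) /\ SE g /\
      is_lim_seq (fun k => NE (seq_sub (multiplier lam (f (phi k))) g)) 0.

(* Main.v *)
Require Import Defs.
From Stdlib Require Import Reals Lra Lia ClassicalEpsilon Classical FunctionalExtensionality.
From Coquelicot Require Import Coquelicot.
Open Scope R_scope.


Lemma sum_single {K : AbsRing} {V : NormedModule K} (a : nat -> V) (n0 : nat) :
  (forall m, m <> n0 -> a m = zero) ->
  forall N, sum_n a N = if Nat.ltb N n0 then zero else a n0.
Proof.
  intros H N. induction N as [|N IH].
  - rewrite sum_O. destruct (Nat.ltb 0 n0) eqn:E.
    + apply Nat.ltb_lt in E. apply H. lia.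
    + apply Nat.ltb_ge in E. assert (n0 = 0%nat) by lia. subst. reflexivity.
  - rewrite sum_Sn, IH.
    destruct (Nat.ltb N n0) eqn:E1; destruct (Nat.ltb (S N) n0) eqn:E2.
    + rewrite (H (S N)); [apply plus_zero_l | apply Nat.ltb_lt in E2; lia].
    + apply Nat.ltb_lt in E1. apply Nat.ltb_ge in E2. assert (S N = n0) by lia.
      subst. apply plus_zero_l.
    + apply Nat.ltb_ge in E1. apply Nat.ltb_lt in E2. lia.
    + rewrite (H (S N)); [apply plus_zero_r | apply Nat.ltb_ge in E1; lia].
Qed.

Lemma is_series_single {K : AbsRing} {V : NormedModule K} (a : nat -> V) (n0 : nat) :
  (forall m, m <> n0 -> a m = zero) -> is_series a (a n0).
Proof.
  intros H. unfold is_series.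
  apply filterlim_ext_loc with (f := fun _ => a n0).
  - exists n0. intros N HN. rewrite (sum_single a n0 H N).
    destruct (Nat.ltb N n0) eqn:E; [apply Nat.ltb_lt in E; lia| reflexivity].
  - apply filterlim_const.
Qed.


Definition Inf (P : nat -> Prop) := forall N, exists k, (N <= k)%nat /\ P k.

Lemma inf_split (P A : nat -> Prop) : Inf P ->
  Inf (fun k => P k /\ A k) \/ Inf (fun k => P k /\ ~ A k).
Proof.
  intros HP. destruct (classic (Inf (fun k => P k /\ A k))) as [H|H]; [left; exact H|right].
  unfold Inf in H. apply not_all_ex_not in H. destruct H as [N0 HN0].
  intros N. destruct (HP (Nat.max N N0)) as [k [Hk Pk]].
  exists k. split; [lia|]. split; [exact Pk|]. intro Ak. apply HN0. exists k.
  split; [lia| auto].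
Qed.

Lemma bisect_n (r : nat -> R) : forall n P lo w, Inf P -> 0 <= w ->
  (forall k, P k -> lo <= r k <= lo + w) ->
  exists Q lo', Inf Q /\ (forall k, Q k -> P k) /\
    forall k, Q k -> lo' <= r k <= lo' + w / 2 ^ n.
Proof.
  induction n as [|n IH]; intros P lo w HP Hw Hb.
  - exists P, lo. split; [exact HP|]. split; [auto|]. intros k Hk.
    simpl. replace (w / 1) with w by field. auto.
  - destruct (inf_split P (fun k => r k <= lo + w/2) HP) as [H|H].
    + destruct (IH _ lo (w/2) H ltac:(lra)) as [Q [lo' [HQ [HQP HQb]]]].
      { intros k [Pk Ak]. specialize (Hb k Pk). lra. }
      exists Q, lo'. split; [auto|]. split; [intros k Hk; apply HQP; auto|].
      intros k Hk. specialize (HQb k Hk). simpl.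
      replace (w / (2 * 2 ^ n)) with (w / 2 / 2 ^ n) by (field; apply pow_nonzero; lra).
      exact HQb.
    + destruct (IH _ (lo + w/2) (w/2) H ltac:(lra)) as [Q [lo' [HQ [HQP HQb]]]].
      { intros k [Pk Ak]. specialize (Hb k Pk). lra. }
      exists Q, lo'. split; [auto|]. split; [intros k Hk; apply HQP; auto|].
      intros k Hk. specialize (HQb k Hk). simpl.
      replace (w / (2 * 2 ^ n)) with (w / 2 / 2 ^ n) by (field; apply pow_nonzero; lra).
      exact HQb.
Qed.

Lemma real_refine (r : nat -> R) (P : nat -> Prop) (B rho : R) : Inf P -> 0 < rho ->
  (forall k, P k -> Rabs (r k) <= B) ->
  exists Q, Inf Q /\ (forall k, Q k -> P k) /\
    forall k m, Q k -> Q m -> Rabs (r k - r m) <= rho.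
Proof.
  intros HP Hrho Hb.
  assert (HB : 0 <= B).
  { destruct (HP 0%nat) as [k [_ Pk]]. specialize (Hb k Pk).
    pose proof (Rabs_pos (r k)). lra. }
  destruct (pow_lt_1_zero (/2) ltac:(rewrite Rabs_pos_eq; lra) (rho / (2*B+1)))
    as [n Hn].
  { apply Rdiv_lt_0_compat; lra. }
  specialize (Hn n (le_n _)). rewrite Rabs_pos_eq in Hn by (apply pow_le; lra).
  destruct (bisect_n r n P (-B) (2*B) HP ltac:(lra)) as [Q [lo [HQ [HQP HQb]]]].
  { intros k Pk. specialize (Hb k Pk). apply Rabs_le_between in Hb. lra. }
  exists Q. split; [auto|]. split; [auto|].
  intros k m Qk Qm. pose proof (HQb k Qk). pose proof (HQb m Qm).
  assert (Hw : 2 * B / 2 ^ n <= rho).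
  { rewrite pow_inv in Hn.
    assert (0 < 2 ^ n) by (apply pow_lt; lra).
    assert (Hq : (2*B+1) * / 2^n < (2*B+1) * (rho/(2*B+1))) by (apply Rmult_lt_compat_l; lra).
    replace ((2*B+1)*(rho/(2*B+1))) with rho in Hq by (field; lra).
    assert (2 * B * / 2 ^ n <= (2 * B + 1) * / 2 ^ n).
    { apply Rmult_le_compat_r; [left; apply Rinv_0_lt_compat; lra | lra]. }
    unfold Rdiv.
    lra. }
  apply Rabs_le. lra.
Qed.


Lemma Cmod_sq (c : C) : Cmod c ^ 2 = (fst c)^2 + (snd c)^2.
Proof. unfold Cmod. rewrite pow2_sqrt; [reflexivity|]. nra. Qed.

Lemma cplx_refine (z : nat -> C) (P : nat -> Prop) (B tau : R) : Inf P -> 0 < tau ->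
  (forall k, P k -> Cmod (z k) <= B) ->
  exists Q, Inf Q /\ (forall k, Q k -> P k) /\
    forall k m, Q k -> Q m -> Cmod (z k - z m) ^ 2 <= tau.
Proof.
  intros HP Ht Hb.
  set (rho := Rmin 1 (tau/2)).
  assert (Hr : 0 < rho) by (unfold rho; apply Rmin_pos; lra).
  assert (Hr1 : rho <= 1) by apply Rmin_l.
  assert (Hr2 : rho <= tau/2) by apply Rmin_r.
  destruct (real_refine (fun k => fst (z k)) P B rho HP Hr) as [Q1 [HQ1 [HQ1P HQ1b]]].
  { intros k Pk. eapply Rle_trans; [apply re_le_Cmod|auto]. }
  destruct (real_refine (fun k => snd (z k)) Q1 B rho HQ1 Hr) as [Q2 [HQ2 [HQ2P HQ2b]]].
  { intros k Pk. eapply Rle_trans; [eapply Rle_trans; [apply Rmax_r|apply Rmax_Cmod]|auto]. }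
  exists Q2. split; [auto|]. split; [auto|].
  intros k m Qk Qm. rewrite Cmod_sq.
  specialize (HQ2b k m Qk Qm). specialize (HQ1b k m (HQ2P k Qk) (HQ2P m Qm)).
  simpl in *. apply Rabs_le_between in HQ2b. apply Rabs_le_between in HQ1b.
  destruct (z k) as [a b]; destruct (z m) as [c d]. simpl in *. nra.
Qed.

Lemma head_refine (x : nat -> nat -> C) (B tau : nat -> R) : (forall n, 0 < tau n) ->
  forall N P, Inf P -> (forall k n, P k -> Cmod (x k n) <= B n) ->
  exists Q, Inf Q /\ (forall k, Q k -> P k) /\
    forall k m n, Q k -> Q m -> (n < N)%nat -> Cmod (x k n - x m n) ^ 2 <= tau n.
Proof.
  intros Ht N. induction N as [|N IH]; intros P HP Hb.
  - exists P. split; [auto|]. split; [auto|]. intros; lia.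
  - destruct (IH P HP Hb) as [Q1 [HQ1 [HQ1P HQ1b]]].
    destruct (cplx_refine (fun k => x k N) Q1 (B N) (tau N) HQ1 (Ht N)) as [Q2 [HQ2 [HQ2P HQ2b]]].
    { intros k Qk. apply Hb. auto. }
    exists Q2. split; [auto|]. split; [auto|].
    intros k m n Qk Qm Hn. destruct (Nat.eq_dec n N) as [->|Hne].
    + apply HQ2b; auto.
    + apply HQ1b; auto. lia.
Qed.

Lemma diag (D : nat -> nat -> R) :
  (forall P, Inf P -> forall e, 0 < e -> exists Q, Inf Q /\ (forall k, Q k -> P k) /\
     forall k m, Q k -> Q m -> D k m <= e) ->
  exists phi : nat -> nat, (forall k, (phi k < phi (S k))%nat) /\
    forall eps, 0 < eps -> exists K, forall i j, (K <= i)%nat -> (K <= j)%nat ->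
      D (phi i) (phi j) < eps.
Proof.
  intros Href.
  assert (Hstep : forall (P : nat -> Prop) (j : nat), exists Q : nat -> Prop,
    Inf P -> Inf Q /\ (forall k, Q k -> P k) /\
      forall k m, Q k -> Q m -> D k m <= (/2)^j).
  { intros P j. destruct (classic (Inf P)) as [HP|HP].
    - destruct (Href P HP ((/2)^j)) as [Q HQ]; [apply pow_lt; lra|].
      exists Q. intros _. exact HQ.
    - exists P. intros H; contradiction. }
  set (F := fun P j => epsilon (inhabits P) (fun Q => Inf P -> Inf Q /\ (forall k, Q k -> P k) /\
      forall k m, Q k -> Q m -> D k m <= (/2)^j)).
  assert (HF : forall P j, Inf P -> Inf (F P j) /\ (forall k, F P j k -> P k) /\
      forall k m, F P j k -> F P j m -> D k m <= (/2)^j).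
  { intros P j HP. exact (epsilon_spec (inhabits P) _ (Hstep P j) HP). }
  set (Ps := fix Ps j := match j with O => F (fun _ => True) O | S j' => F (Ps j') (S j') end).
  assert (HPs : forall j, Inf (Ps j) /\ forall k m, Ps j k -> Ps j m -> D k m <= (/2)^j).
  { induction j as [|j IH].
    - destruct (HF (fun _ => True) O) as [H1 [_ H3]].
      { intros N. exists N. split; auto. }
      split; auto.
    - destruct IH as [IH1 _]. destruct (HF (Ps j) (S j) IH1) as [H1 [_ H3]]. split; auto. }
  assert (Hsub : forall j k, Ps (S j) k -> Ps j k).
  { intros j k H. destruct (HF (Ps j) (S j) (proj1 (HPs j))) as [_ [H2 _]]. apply H2. exact H. }
  assert (Hsub' : forall i j k, (i <= j)%nat -> Ps j k -> Ps i k).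
  { intros i j k Hij. induction Hij; auto. }
  set (pick := fun (N : nat) (P : nat -> Prop) =>
     epsilon (inhabits O) (fun k => (N <= k)%nat /\ P k)).
  assert (Hpick : forall N P, Inf P -> (N <= pick N P)%nat /\ P (pick N P)).
  { intros N P HP. exact (epsilon_spec (inhabits O) (fun k => (N <= k)%nat /\ P k) (HP N)). }
  set (phi := fix phi j := match j with O => pick O (Ps O) | S j' => pick (S (phi j')) (Ps (S j')) end).
  assert (Hphi : forall j, Ps j (phi j)).
  { intros [|j].
    - exact (proj2 (Hpick O (Ps O) (proj1 (HPs O)))).
    - exact (proj2 (Hpick _ (Ps (S j)) (proj1 (HPs (S j))))). }
  exists phi. split.
  - intros k. exact (proj1 (Hpick _ (Ps (S k)) (proj1 (HPs (S k))))).
  - intros eps Heps.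
    destruct (pow_lt_1_zero (/2) ltac:(rewrite Rabs_pos_eq; lra) eps Heps) as [K HK].
    exists K. intros i j Hi Hj.
    specialize (HK K (le_n _)). rewrite Rabs_pos_eq in HK by (apply pow_le; lra).
    eapply Rle_lt_trans; [|exact HK]. apply (proj2 (HPs K)).
    + apply Hsub' with i; auto.
    + apply Hsub' with j; auto.
Qed.


Lemma Series_nonneg (a : nat -> R) : ex_series a -> (forall n, 0 <= a n) -> 0 <= Series a.
Proof.
  intros He H. rewrite <- (is_series_unique (fun _ => 0) 0).
  - apply Series_le; [intros n; split; [lra| apply H]|exact He].
  - exact (is_series_single (fun _ : nat => 0) O (fun _ _ => eq_refl)).
Qed.

Lemma term_le_Series (a : nat -> R) (n : nat) : ex_series a -> (forall n, 0 <= a n) -> a n <= Series a.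
Proof.
  intros He H.
  rewrite <- (is_series_unique (fun m => if Nat.eqb m n then a n else 0) (a n)).
  - apply Series_le; [|exact He]. intros m. destruct (Nat.eqb m n) eqn:E.
    + apply Nat.eqb_eq in E. subst. split; [apply H|lra].
    + split; [lra| apply H].
  - pose proof (is_series_single (fun m => if Nat.eqb m n then a n else 0) n) as Hs.
    simpl in Hs. rewrite Nat.eqb_refl in Hs. apply Hs.
    intros m Hm. apply Nat.eqb_neq in Hm. rewrite Hm. reflexivity.
Qed.

Lemma coef_le_l2 (a : cseq) (n : nat) : in_l2 a -> Cmod (a n) <= l2_norm a.
Proof.
  intros Ha. unfold l2_norm. rewrite <- (sqrt_pow2 (Cmod (a n))) by apply Cmod_ge_0.
  apply sqrt_le_1_alt. apply (term_le_Series (fun n => Cmod (a n) ^ 2)); [exact Ha|].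
  intros m. apply pow2_ge_0.
Qed.

Lemma l2_Series_le (a : cseq) (K : R) : in_l2 a -> l2_norm a <= K ->
  Series (fun n => Cmod (a n) ^ 2) <= K ^ 2.
Proof.
  intros Ha HK. unfold l2_norm in HK.
  assert (H0 : 0 <= Series (fun n => Cmod (a n) ^ 2)).
  { apply Series_nonneg; [exact Ha|intros; apply pow2_ge_0]. }
  pose proof (sqrt_pos (Series (fun n => Cmod (a n) ^ 2))).
  rewrite <- (pow2_sqrt (Series _)) by exact H0.
  apply pow_incr. lra.
Qed.


Lemma suff_compact SX NX SE NE lam :
  Banach_seq_lattice SE NE -> l2_incl SE NE -> incl_l2 SX NX ->
  bounded_multiplier SX NX SE NE lam ->
  (forall eta, 0 < eta -> exists N, forall n, (N <= n)%nat -> Cmod (lam n) < eta) ->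
  compact_multiplier SX NX SE NE lam.
Proof.
  intros [HEb _] [KE [HKE HE]] [Kx [HKx HX]] [HM _] Hlam f Hf Hf1.
  assert (Hfl2 : forall k, in_l2 (f k) /\ Series (fun n => Cmod (f k n)^2) <= Kx^2).
  { intros k. destruct (HX _ (Hf k)) as [H1 H2]. split; auto. apply l2_Series_le; auto.
    specialize (Hf1 k). nra. }
  assert (Hco : forall k n, Cmod (f k n) <= Kx).
  { intros k n. destruct (HX _ (Hf k)) as [H1 H2]. specialize (Hf1 k).
    pose proof (coef_le_l2 _ n H1). nra. }
  destruct (diag (fun k m => NE (seq_sub (multiplier lam (f k)) (multiplier lam (f m)))))
    as [phi [Hphi Hcau]].
  { intros P HP e He.
    set (r := (e / (KE + 1)) ^ 2).
    assert (Hr : 0 < r) by (unfold r; apply pow_lt; apply Rdiv_lt_0_compat; lra).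
    set (del := r / 2).
    set (eta := sqrt (r / 2) / (2 * Kx + 1)).
    assert (Heta0 : 0 < eta).
    { unfold eta. apply Rdiv_lt_0_compat; [apply sqrt_lt_R0; lra| lra]. }
    assert (Heta2 : eta ^ 2 * (2 * Kx + 1) ^ 2 = r / 2).
    { rewrite <- Rpow_mult_distr.
      replace (eta * (2 * Kx + 1)) with (sqrt (r / 2)) by (unfold eta; field; lra).
      apply pow2_sqrt; lra. }
    assert (Heta : 4 * eta ^ 2 * Kx ^ 2 <= r / 2).
    { rewrite <- Heta2. assert (0 <= eta ^ 2) by apply pow2_ge_0. nra. }
    destruct (Hlam eta Heta0) as [N HN].
    destruct (head_refine (fun k n => (lam n * f k n)%C) (fun n => Cmod (lam n) * Kx)
       (fun n => del / 2 * (/ 2) ^ n)) with (N := N) (P := P) as [Q [HQ [HQP HQb]]].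
    { intros n. apply Rmult_lt_0_compat; [unfold del; lra| apply pow_lt; lra]. }
    { exact HP. }
    { intros k n _. rewrite Cmod_mult. apply Rmult_le_compat_l; [apply Cmod_ge_0|apply Hco]. }
    exists Q. split; [exact HQ|]. split; [exact HQP|].
    intros k m Qk Qm.
    set (d := seq_sub (multiplier lam (f k)) (multiplier lam (f m))).
    set (Sk := Series (fun n => Cmod (f k n) ^ 2)).
    set (Sm := Series (fun n => Cmod (f m n) ^ 2)).
    set (s := fun n => del / 2 * (/ 2) ^ n + (2 * eta ^ 2 * Cmod (f k n) ^ 2 + 2 * eta ^ 2 * Cmod (f m n) ^ 2)).
    assert (Hgeom : is_series (fun n => (/2) ^ n) 2).
    { pose proof (is_series_geom (/2) ltac:(rewrite Rabs_pos_eq; lra)) as Hg.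
      replace (/ (1 - /2)) with 2 in Hg by field. exact Hg. }
    assert (Hs : is_series s (del / 2 * 2 + (2 * eta ^ 2 * Sk + 2 * eta ^ 2 * Sm))).
    { apply (is_series_plus (fun n => del / 2 * (/ 2) ^ n)
         (fun n => 2 * eta ^ 2 * Cmod (f k n) ^ 2 + 2 * eta ^ 2 * Cmod (f m n) ^ 2)).
      - apply (is_series_scal_l (del/2) (fun n => (/2)^n)). exact Hgeom.
      - apply (is_series_plus (fun n => 2 * eta ^ 2 * Cmod (f k n) ^ 2)
                (fun n => 2 * eta ^ 2 * Cmod (f m n) ^ 2)).
        + apply (is_series_scal_l (2 * eta ^ 2) (fun n => Cmod (f k n) ^ 2)).
          apply Series_correct. apply Hfl2.
        + apply (is_series_scal_l (2 * eta ^ 2) (fun n => Cmod (f m n) ^ 2)).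
          apply Series_correct. apply Hfl2. }
    assert (Hpt : forall n, 0 <= Cmod (d n) ^ 2 <= s n).
    { intros n. split; [apply pow2_ge_0|].
      assert (Hk0 : 0 <= Cmod (f k n)) by apply Cmod_ge_0.
      assert (Hm0 : 0 <= Cmod (f m n)) by apply Cmod_ge_0.
      assert (Hg0 : 0 <= del / 2 * (/ 2) ^ n).
      { apply Rmult_le_pos; [unfold del; lra| apply pow_le; lra]. }
      unfold s. destruct (Nat.lt_ge_cases n N) as [Hn|Hn].
      - pose proof (HQb k m n Qk Qm Hn) as H. simpl in H.
        change (Cmod (d n)) with (Cmod (lam n * f k n - lam n * f m n)%C).
        assert (0 <= eta ^ 2) by apply pow2_ge_0. nra.
      - change (Cmod (d n)) with (Cmod (lam n * f k n - lam n * f m n)%C).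
        replace (lam n * f k n - lam n * f m n)%C with (lam n * (f k n - f m n))%C by ring.
        rewrite Cmod_mult.
        assert (Ht : Cmod (f k n - f m n) <= Cmod (f k n) + Cmod (f m n)).
        { unfold Cminus. eapply Rle_trans; [apply Cmod_triangle|]. rewrite Cmod_opp. lra. }
        pose proof (Cmod_ge_0 (f k n - f m n)%C).
        pose proof (Cmod_ge_0 (lam n)). specialize (HN n ltac:(lia)).
        assert (Cmod (lam n) * Cmod (f k n - f m n) <= eta * (Cmod (f k n) + Cmod (f m n))).
        { apply Rmult_le_compat; lra. }
        assert (0 <= Cmod (lam n) * Cmod (f k n - f m n)) by nra.
        assert ((Cmod (lam n) * Cmod (f k n - f m n)) ^ 2 <= (eta * (Cmod (f k n) + Cmod (f m n))) ^ 2).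
        { apply pow_incr. lra. }
        assert ((eta * (Cmod (f k n) + Cmod (f m n))) ^ 2 <=
                2 * eta ^ 2 * Cmod (f k n) ^ 2 + 2 * eta ^ 2 * Cmod (f m n) ^ 2).
        { assert (0 <= eta ^ 2) by apply pow2_ge_0.
          assert (0 <= (Cmod (f k n) - Cmod (f m n)) ^ 2) by apply pow2_ge_0. nra. }
        lra. }
    assert (Hd2 : in_l2 d).
    { unfold in_l2. apply (@ex_series_le R_AbsRing R_CompleteNormedModule _ s).
      - intros n. change (norm (Cmod (d n) ^ 2)) with (Rabs (Cmod (d n) ^ 2)).
        rewrite Rabs_pos_eq; apply Hpt.
      - eexists; exact Hs. }
    assert (HSd : Series (fun n => Cmod (d n) ^ 2) <= r).
    { eapply Rle_trans. apply Series_le; [exact Hpt| eexists; exact Hs].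
      rewrite (is_series_unique _ _ Hs).
      destruct (Hfl2 k) as [_ Hk]. destruct (Hfl2 m) as [_ Hm].
      fold Sk in Hk. fold Sm in Hm. unfold del.
      assert (0 <= eta ^ 2) by apply pow2_ge_0. nra. }
    destruct (HE d Hd2) as [_ HNd].
    assert (Hl2 : l2_norm d <= e / (KE + 1)).
    { unfold l2_norm. rewrite <- (sqrt_pow2 (e / (KE + 1))).
      - apply sqrt_le_1_alt. exact HSd.
      - left. apply Rdiv_lt_0_compat; lra. }
    assert (KE * (e / (KE + 1)) <= e).
    { unfold Rdiv. replace (KE * (e * / (KE + 1))) with (e * (KE / (KE + 1))) by (field; lra).
      assert (KE / (KE + 1) <= 1).
      { apply (Rmult_le_reg_r (KE + 1)); [lra|]. unfold Rdiv. rewrite Rmult_assoc, Rinv_l by lra. lra. }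
      nra. }
    eapply Rle_trans; [exact HNd|]. eapply Rle_trans; [|exact H].
    apply Rmult_le_compat_l; assumption. }
  destruct (bs_complete _ _ HEb (fun k => multiplier lam (f (phi k)))) as [g [Hg Hlim]].
  - intros k. apply HM. apply Hf.
  - intros eps Heps. destruct (Hcau eps Heps) as [K HK]. exists K. intros i j Hi Hj.
    apply HK; assumption.
  - exists phi, g. split; [exact Hphi|]. split; assumption.
Qed.


Definition mono (n : nat) : cseq := fun m => if Nat.eqb m n then RtoC 1 else RtoC 0.

Lemma mono_Hinf n : in_Hinf (mono n) /\ sup_bounded_by (mono n) 1.
Proof.
  assert (Hz : forall z : C, forall m, m <> n -> Cmult (mono n m) (Cpow z m) = zero).
  { intros z m Hm. unfold mono. apply Nat.eqb_neq in Hm. rewrite Hm.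
    apply injective_projections; simpl; ring. }
  assert (Hb : sup_bounded_by (mono n) 1).
  { intros z Hz1 l Hl.
    pose proof (is_series_single _ n (Hz z)) as Hs.
    rewrite (filterlim_locally_unique _ _ _ Hl Hs).
    unfold mono. rewrite Nat.eqb_refl. rewrite Cmod_mult, Cmod_1, Cmod_pow.
    rewrite Rmult_1_l. rewrite <- (pow1 n). apply pow_incr. split; [apply Cmod_ge_0|lra]. }
  split; [split|exact Hb].
  - intros z _. eexists. exact (is_series_single _ n (Hz z)).
  - exists 1. exact Hb.
Qed.

Lemma mono_l2 n : in_l2 (mono n) /\ l2_norm (mono n) = 1.
Proof.
  assert (Hs : is_series (fun m => Cmod (mono n m) ^ 2) 1).
  { pose proof (is_series_single (fun m => Cmod (mono n m) ^ 2) n) as H.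
    replace 1 with (Cmod (mono n n) ^ 2). apply H.
    2: { unfold mono. rewrite Nat.eqb_refl, Cmod_1. ring. }
    intros m Hm. unfold mono. apply Nat.eqb_neq in Hm. rewrite Hm, Cmod_0. simpl.
    rewrite Rmult_0_l. reflexivity. }
  split.
  - eexists; exact Hs.
  - unfold l2_norm. rewrite (is_series_unique _ _ Hs). apply sqrt_1.
Qed.


Lemma phi_ge (phi : nat -> nat) : (forall k, (phi k < phi (S k))%nat) -> forall k, (k <= phi k)%nat.
Proof. intros H k. induction k; [lia|]. specialize (H k). lia. Qed.

Lemma nec SX NX SE NE lam :
  Banach_space_of_analytic SX NX -> Hinf_incl SX NX -> incl_l2 SX NX ->
  Banach_seq_lattice SE NE -> incl_linf SE NE ->
  bounded_multiplier SX NX SE NE lam ->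
  compact_multiplier SX NX SE NE lam ->
  forall eta, 0 < eta -> exists N, forall n, (N <= n)%nat -> Cmod (lam n) < eta.
Proof.
  intros [HXb _] [KH [HKH HH]] [K2 [HK2 HX2]] [HEb _] [Ki [HKi HEi]] [HM _] Hc eta Heta.
  apply NNPP. intros Hno.
  assert (Hfr : forall N, exists n, (N <= n)%nat /\ eta <= Cmod (lam n)).
  { intros N. apply NNPP. intros H. apply Hno. exists N. intros n Hn.
    destruct (Rlt_or_le (Cmod (lam n)) eta) as [|Hl]; [assumption|].
    exfalso. apply H. exists n. split; assumption. }
  set (nn := fun N => epsilon (inhabits O) (fun n => (N <= n)%nat /\ eta <= Cmod (lam n))).
  assert (Hnn : forall N, (N <= nn N)%nat /\ eta <= Cmod (lam (nn N))).
  { intros N. exact (epsilon_spec (inhabits O) (fun n => (N <= n)%nat /\ eta <= Cmod (lam n)) (Hfr N)). }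
  set (c := fun n => NX (mono n)).
  assert (Hc1 : forall n, SX (mono n) /\ 0 < c n /\ c n <= KH).
  { intros n. destruct (mono_Hinf n) as [Hi Hb]. destruct (HH _ _ Hi Hb) as [HS Hle].
    destruct (mono_l2 n) as [_ Hl]. destruct (HX2 _ HS) as [_ Hl2]. rewrite Hl in Hl2.
    split; [exact HS|]. unfold c. split; [|lra].
    destruct (Rlt_or_le 0 (NX (mono n))) as [|Hn]; [assumption|].
    pose proof (bs_nonneg _ _ HXb _ HS). nra. }
  set (fm := fun k => seq_scal (RtoC (/ c (nn k))) (mono (nn k))).
  assert (Hfm : forall k, SX (fm k) /\ NX (fm k) <= 1).
  { intros k. destruct (Hc1 (nn k)) as [HS [Hp _]]. split.
    - unfold fm. apply (bs_scal _ _ HXb); auto.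
    - unfold fm. rewrite (bs_homog _ _ HXb) by auto. rewrite Cmod_R, Rabs_pos_eq.
      + fold (c (nn k)). rewrite Rinv_l; lra.
      + left. apply Rinv_0_lt_compat; auto. }
  destruct (Hc fm (fun k => proj1 (Hfm k)) (fun k => proj2 (Hfm k))) as [phi [g [Hphi [Hg Hlim]]]].
  assert (HKHp : 0 < KH) by (destruct (Hc1 O) as [_ [? ?]]; lra).
  set (del := eta / (KH * (Ki + 1)) / 2).
  assert (Hdel : 0 < del).
  { unfold del. apply Rdiv_lt_0_compat; [|lra]. apply Rdiv_lt_0_compat; [lra|].
    apply Rmult_lt_0_compat; lra. }
  apply is_lim_seq_spec in Hlim. destruct (Hlim (mkposreal del Hdel)) as [K HK]. simpl in HK.
  set (i := K). set (j := (K + nn (phi K) + 1)%nat).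
  assert (Hi : NE (seq_sub (multiplier lam (fm (phi i))) g) < del).
  { specialize (HK i (le_n _)). rewrite Rminus_0_r in HK. eapply Rle_lt_trans; [apply Rle_abs|exact HK]. }
  assert (Hj : NE (seq_sub (multiplier lam (fm (phi j))) g) < del).
  { specialize (HK j ltac:(unfold j; lia)). rewrite Rminus_0_r in HK. eapply Rle_lt_trans; [apply Rle_abs|exact HK]. }
  set (a := multiplier lam (fm (phi i))). set (b := multiplier lam (fm (phi j))).
  assert (HSa : SE a) by (apply HM; apply Hfm).
  assert (HSb : SE b) by (apply HM; apply Hfm).
  assert (Hsub : forall u v, SE u -> SE v -> SE (seq_sub u v)).
  { intros u v Hu Hv. replace (seq_sub u v) with (seq_add u (seq_scal (RtoC (-1)) v)).
    - apply (bs_add _ _ HEb); auto. apply (bs_scal _ _ HEb); auto.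
    - apply functional_extensionality. intros n. unfold seq_add, seq_sub, seq_scal.
      apply injective_projections; simpl; ring. }
  assert (Hx : NE (seq_sub a b) < 2 * del).
  { replace (seq_sub a b) with (seq_add (seq_sub a g) (seq_scal (RtoC (-1)) (seq_sub b g))).
    - eapply Rle_lt_trans. apply (bs_triangle _ _ HEb); [apply Hsub; auto|apply (bs_scal _ _ HEb); auto; apply Hsub; auto].
      rewrite (bs_homog _ _ HEb) by (apply Hsub; auto). rewrite Cmod_R, Rabs_left by lra.
      fold a in Hi. fold b in Hj. lra.
    - apply functional_extensionality. intros n. unfold seq_add, seq_sub, seq_scal.
      apply injective_projections; simpl; ring. }
  set (ni := nn (phi i)). set (nj := nn (phi j)).
  assert (Hneq : ni <> nj).
  { unfold ni, nj. pose proof (proj1 (Hnn (phi j))). pose proof (phi_ge phi Hphi j).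
    unfold j in *. unfold i. lia. }
  pose proof (HEi _ (Hsub a b HSa HSb) ni) as Hco.
  assert (Hval : seq_sub a b ni = (lam ni * RtoC (/ c ni))%C).
  { unfold a, b, seq_sub, multiplier, fm, seq_scal, mono. fold ni. fold nj.
    rewrite Nat.eqb_refl. apply Nat.eqb_neq in Hneq. rewrite Hneq.
    apply injective_projections; simpl; ring. }
  rewrite Hval, Cmod_mult, Cmod_R, Rabs_pos_eq in Hco.
  2: { left. apply Rinv_0_lt_compat. apply Hc1. }
  destruct (Hc1 ni) as [_ [Hcp Hcle]].
  pose proof (proj2 (Hnn (phi i))) as Hl. fold ni in Hl.
  assert (H1 : eta / KH <= Cmod (lam ni) * / c ni).
  { apply Rle_trans with (Cmod (lam ni) * / KH).
    - unfold Rdiv. apply Rmult_le_compat_r; [left; apply Rinv_0_lt_compat; lra| lra].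
    - apply Rmult_le_compat_l; [apply Cmod_ge_0|]. apply Rinv_le_contravar; lra. }
  assert (H2 : Ki * NE (seq_sub a b) <= Ki * (2 * del)) by (apply Rmult_le_compat_l; lra).
  assert (H3 : Ki * (2 * del) < eta / KH).
  { unfold del. replace (Ki * (2 * (eta / (KH * (Ki + 1)) / 2))) with ((eta / KH) * (Ki / (Ki + 1))) by (field; lra).
    assert (0 < eta / KH) by (apply Rdiv_lt_0_compat; lra).
    assert (Ki / (Ki + 1) < 1).
    { apply (Rmult_lt_reg_r (Ki + 1)); [lra|]. unfold Rdiv. rewrite Rmult_assoc, Rinv_l by lra. lra. }
    nra. }
  lra.
Qed.


Theorem theorem2p5
  (SX : cseq -> Prop) (NX : cseq -> R)
  (SE : cseq -> Prop) (NE : cseq -> R) (lam : cseq) :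
  Banach_space_of_analytic SX NX ->
  Hinf_incl SX NX -> incl_l2 SX NX ->
  Banach_seq_lattice SE NE -> order_continuous SE NE ->
  l2_incl SE NE -> incl_linf SE NE ->
  bounded_multiplier SX NX SE NE lam ->
  (compact_multiplier SX NX SE NE lam <->
   LimSup_seq (fun n => Cmod (lam n)) = Finite 0).
Proof.
  intros HX HH H2 HE _ Hl2 Hi HM. split.
  - intros Hc. pose proof (nec SX NX SE NE lam HX HH H2 HE Hi HM Hc) as Hl.
    apply is_LimSup_seq_unique. apply is_lim_LimSup_seq. apply is_lim_seq_spec.
    intros eps. destruct (Hl eps (cond_pos eps)) as [N HN]. exists N. intros n Hn.
    rewrite Rminus_0_r, Rabs_pos_eq by apply Cmod_ge_0. apply HN; exact Hn.
  - intros HL. apply suff_compact; auto.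
    intros eta Heta.
    pose proof (proj2_sig (ex_LimSup_seq (fun n => Cmod (lam n)))) as H.
    unfold LimSup_seq in HL. rewrite HL in H. simpl in H.
    destruct (H (mkposreal eta Heta)) as [_ [N HN]]. exists N. intros n Hn.
    specialize (HN n Hn). simpl in HN. lra.
Qed.
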